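(* Let $p\ge3$ be a prime and let $\mathbf{Q}_p(\sqrt d)$ be an unramified quadratic extension of $\mathbf{Q}_p$. Suppose $\lambda\in U^0(\sqrt d)$ has order $l$ modulo $p$, and let $k=\nu_p(\lambda^l-1)$. Then the closed subgroup of $U^0(\sqrt d)$ generated by $\lambda$ is $$\overline{\{\lambda^n:n\in\mathbf{N}\}}=\bigsqcup_{i=0}^{l-1}\left(\lambda^i+p^k\mathbf{Z}_p[\sqrt d]\right)\cap U^0(\sqrt d).$$ In particular, if $l=2(p+1)$ and $k=1$, then $\overline{\{\lambda^n:n\in\mathbf{N}\}}=U^0(\sqrt d)$.
   Context: Here $d\in\mathbf{Z}_p^*$ is a non-square, and $\mathbf{Z}_p[\sqrt d]$ is the ring of integers of $\mathbf{Q}_p(\sqrt d)$. The norm is $N(x+y\sqrt d)=x^2-y^2d$, and $U^0(\sqrt d)=\{z\in\mathbf{Z}_p[\sqrt d]^*: N(z)=\pm1\}$. The order of a unit $\lambda$ modulo $p$ is the least $l\ge1$ with $\lambda^l-1\in p\mathbf{Z}_p[\sqrt d]$. $\nu_p$ is the valuation on $\mathbf{Q}_p(\sqrt d)$ with $\nu_p(p)=1$. $\bigsqcup$ denotes disjoint union. *)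

(* Defs.v *)
(* A self-contained model of Z_p and Z_p[sqrt d] as inverse
   limits: an element of Z_p is a coherent sequence a : nat -> int with
   0 <= a n < p^n and a n = a (n+1) mod p^n (so a n is the image in Z/p^n);
   an element of Z_p[sqrt d] = Z_p + Z_p sqrt d is a coherent sequence of
   pairs (x_n, y_n) standing for x + y sqrt d mod p^n. *)
From mathcomp Require Import all_boot all_algebra.
Set Implicit Arguments. Unset Strict Implicit. Unset Printing Implicit Defensive.
Import GRing.Theory Num.Theory.
Local Open Scope ring_scope.

Definition pk (p n : nat) : int := (p%:Z) ^+ n.

Definition coh (p : nat) (a : nat -> int) : Prop :=
  forall n : nat, a n = (a n.+1 %% pk p n)%Z.

Definition cohO (p : nat) (z : nat -> int * int) : Prop :=
  coh p (fun n => (z n).1) /\ coh p (fun n => (z n).2).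

Definition mulO (p : nat) (d : nat -> int) (z w : nat -> int * int) : nat -> int * int :=
  fun n => ((((z n).1 * (w n).1 + d n * ((z n).2 * (w n).2)) %% pk p n)%Z,
            (((z n).1 * (w n).2 + (z n).2 * (w n).1) %% pk p n)%Z).

Definition oneO (p : nat) : nat -> int * int := fun n => ((1 %% pk p n)%Z, 0).

Definition subO (p : nat) (z w : nat -> int * int) : nat -> int * int :=
  fun n => ((((z n).1 - (w n).1) %% pk p n)%Z, (((z n).2 - (w n).2) %% pk p n)%Z).

Definition powO (p : nat) (d : nat -> int) (z : nat -> int * int) (m : nat) :
  nat -> int * int := iter m (mulO p d z) (oneO p).

Definition normO (p : nat) (d : nat -> int) (z : nat -> int * int) : nat -> int :=
  fun n => (((z n).1 ^+ 2 - d n * (z n).2 ^+ 2) %% pk p n)%Z.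

Definition oneZp (p : nat) : nat -> int := fun n => (1 %% pk p n)%Z.
Definition m1Zp (p : nat) : nat -> int := fun n => ((-1) %% pk p n)%Z.

Definition unitO (p : nat) (d : nat -> int) (z : nat -> int * int) : Prop :=
  exists w, cohO p w /\ mulO p d z w = oneO p.

Definition U0 (p : nat) (d : nat -> int) (z : nat -> int * int) : Prop :=
  cohO p z /\ unitO p d z /\ (normO p d z = oneZp p \/ normO p d z = m1Zp p).

(* z \in p^k Z_p[sqrt d], for k \in N \cup {oo} (None = oo, p^oo Z_p[sqrt d] = 0) *)
Definition in_pkO (k : option nat) (z : nat -> int * int) : Prop :=
  match k with
  | Some k => z k = (0, 0)
  | None => forall n, z n = (0, 0)
  end.

(* nu_p(z) = k, with nu_p(0) = oo (None) *)
Definition nuO (z : nat -> int * int) (k : option nat) : Prop :=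
  match k with
  | Some k => z k = (0, 0) /\ z k.+1 <> (0, 0)
  | None => forall n, z n = (0, 0)
  end.

Definition order_modp (p : nat) (d : nat -> int) (lam : nat -> int * int) (l : nat) : Prop :=
  (0 < l)%N /\ in_pkO (Some 1%N) (subO p (powO p d lam l) (oneO p)) /\
  forall m, (0 < m < l)%N -> ~ in_pkO (Some 1%N) (subO p (powO p d lam m) (oneO p)).

Definition in_closure (p : nat) (d : nat -> int) (lam z : nat -> int * int) : Prop :=
  forall k : nat, exists n : nat, in_pkO (Some k) (subO p (powO p d lam n) z).

Definition in_piece (p : nat) (d : nat -> int) (lam : nat -> int * int) (k : option nat)
  (i : nat) (z : nat -> int * int) : Prop :=
  in_pkO k (subO p z (powO p d lam i)) /\ U0 p d z.

Definition nonsquareZp (p : nat) (d : nat -> int) : Prop :=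
  ~ exists s, coh p s /\ forall n, ((s n * s n) %% pk p n)%Z = d n.

(* Main.v *)
From HB Require Import structures.
Require Import Defs.
From mathcomp Require Import all_boot all_algebra ring zify.
From Stdlib Require Import FunctionalExtensionality.
Set Implicit Arguments. Unset Strict Implicit. Unset Printing Implicit Defensive.
Import GRing.Theory Num.Theory.
Local Open Scope ring_scope.

Definition muld (D : int) (x y : int * int) : int * int :=
  (x.1 * y.1 + D * (x.2 * y.2), x.1 * y.2 + x.2 * y.1).
Lemma muldA D : associative (muld D).
Proof. move=> [a b] [c e] [f g]; rewrite /muld /=; congr pair; ring. Qed.
Lemma muldC D : commutative (muld D).
Proof. move=> [a b] [c e]; rewrite /muld /=; congr pair; ring. Qed.
Lemma muld1 D : left_id ((1, 0) : int * int) (muld D).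
Proof. move=> [a b]; rewrite /muld /=; congr pair; ring. Qed.
Lemma muldDl D : left_distributive (muld D) (+%R : int * int -> int * int -> int * int).
Proof. move=> [a b] [c e] [f g]; rewrite /muld /=; congr pair; simpl; ring. Qed.
Lemma oned_neq0 : ((1, 0) : int * int) != 0.
Proof. by []. Qed.
Definition zsq (D : int) : Type := (int * int)%type.
HB.instance Definition _ (D : int) := GRing.Zmodule.on (zsq D).
HB.instance Definition _ (D : int) := GRing.Zmodule_isComNzRing.Build (zsq D)
  (@muldA D) (@muldC D) (@muld1 D) (@muldDl D) oned_neq0.
Lemma mulE D (x y : zsq D) : x * y = muld D x y. Proof. by []. Qed.
Lemma oneE D : (1 : zsq D) = (1, 0). Proof. by []. Qed.
Lemma addE D (x y : zsq D) : x + y = (x.1 + y.1, x.2 + y.2). Proof. by []. Qed.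
Lemma oppE D (x : zsq D) : - x = (- x.1, - x.2). Proof. by []. Qed.
Lemma subE D (x y : zsq D) : x - y = (x.1 - y.1, x.2 - y.2). Proof. by []. Qed.

Definition dv (c : int) (x : int * int) : bool := (c %| x.1)%Z && (c %| x.2)%Z.
Definition sc D (c : int) : zsq D := (c, 0).
Definition cj D (x : zsq D) : zsq D := (x.1, - x.2).
Definition nrm (D : int) (x : int * int) : int := x.1 ^+ 2 - D * x.2 ^+ 2.


Lemma zdD (c a b : int) : (c %| a)%Z -> (c %| b)%Z -> (c %| a + b)%Z.
Proof. exact: rpredD. Qed.
Lemma zdN (c a : int) : (c %| a)%Z -> (c %| - a)%Z.
Proof. by move=> h; rewrite -mulN1r dvdz_mull. Qed.

Section DV.
Variable D : int.
Implicit Types x y : zsq D.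

Lemma dv0 c : dv c (0 : zsq D).
Proof. by rewrite /dv /= dvdz0. Qed.
Lemma dvD c x y : dv c x -> dv c y -> dv c (x + y).
Proof. by case/andP=> h1 h2 /andP[h3 h4]; apply/andP; split; apply: zdD. Qed.
Lemma dvN c x : dv c x -> dv c (- x).
Proof. by case/andP=> h1 h2; apply/andP; split; apply: zdN. Qed.
Lemma dvB c x y : dv c x -> dv c y -> dv c (x - y).
Proof. by move=> h1 h2; apply: dvD => //; apply: dvN. Qed.
Lemma dvMl c x y : dv c x -> dv c (x * y).
Proof.
case: x => [a b]; case: y => [e f]; case/andP => /= h1 h2.
rewrite mulE /dv /muld /=.
by apply/andP; split; apply: zdD; do ?[exact: dvdz_mulr | apply: dvdz_mull; exact: dvdz_mulr].

Qed.
Lemma dvMr c x y : dv c y -> dv c (x * y).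
Proof. by rewrite mulrC; apply: dvMl. Qed.
Lemma sc_mul c y : sc D c * y = (c * y.1, c * y.2).
Proof. by case: y => a b; rewrite mulE /muld /=; congr pair; ring. Qed.
Lemma scM a b : sc D (a * b) = sc D a * sc D b.
Proof. by rewrite sc_mul /sc /=; congr pair; ring. Qed.
Lemma scD a b : sc D (a + b) = sc D a + sc D b.
Proof. by rewrite /sc addE /= addr0. Qed.
Lemma scB a b : sc D (a - b) = sc D a - sc D b.
Proof. by rewrite /sc subE /= subr0. Qed.
Lemma sc1 : sc D 1 = 1. Proof. by []. Qed.
Lemma scX a n : sc D (a ^+ n) = sc D a ^+ n.
Proof. by elim: n => [|n IH]; rewrite ?expr0 // !exprS scM IH. Qed.
Lemma dv_sc c a : dv c (sc D a) = (c %| a)%Z.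
Proof. by rewrite /dv /= dvdz0 andbT. Qed.
Lemma dv_scM c e y : dv e y -> dv (c * e) (sc D c * y).
Proof.
case/andP => h1 h2; rewrite sc_mul /dv /=.
by case/dvdzP: h1 => q1 ->; case/dvdzP: h2 => q2 ->; apply/andP; split; rewrite mulrCA; apply: dvdz_mull; exact: dvdzz.
Qed.
Lemma dv_scK c e y : c != 0 -> dv (c * e) (sc D c * y) -> dv e y.
Proof. by move=> c0; rewrite sc_mul /dv /= !dvdz_mul2l. Qed.
Lemma dv_trans c c' x : (c %| c')%Z -> dv c' x -> dv c x.
Proof. by move=> h /andP[h1 h2]; rewrite /dv (dvdz_trans h h1) (dvdz_trans h h2). Qed.
Lemma dvP c x : dv c x -> exists y, x = sc D c * y.
Proof.
case: x => a b /andP[/= /dvdzP[q1 ->] /dvdzP[q2 ->]].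
by exists (q1, q2); rewrite sc_mul /=; congr pair; ring.
Qed.
Lemma dv_scm c y : dv c (sc D c * y).
Proof. by rewrite sc_mul /dv /= !dvdz_mulr. Qed.
Lemma dv1 x : dv 1 x.
Proof. by rewrite /dv !dvd1z. Qed.

Lemma cjM x y : cj (x * y) = cj x * cj y.
Proof. by case: x => a b; case: y => e f; rewrite !mulE /cj /muld /=; congr pair; ring. Qed.
Lemma cj1 : cj (1 : zsq D) = 1. Proof. by rewrite /cj /= oppr0. Qed.
Lemma cjX x n : cj (x ^+ n) = cj x ^+ n.
Proof. by elim: n => [|n IH]; rewrite ?expr0 ?cj1 // !exprS cjM IH. Qed.
Lemma cjB x y : cj (x - y) = cj x - cj y.
Proof. by rewrite /cj !subE /= opprB; congr pair; ring. Qed.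
Lemma cj_sc a : cj (sc D a) = sc D a.
Proof. by rewrite /cj /sc /= oppr0. Qed.
Lemma mul_cj x : x * cj x = sc D (nrm D x).
Proof. by case: x => a b; rewrite mulE /cj /sc /nrm /muld /=; congr pair; ring. Qed.
Lemma nrmM x y : nrm D (x * y) = nrm D x * nrm D y.
Proof. by case: x => a b; case: y => e f; rewrite mulE /nrm /muld /=; ring. Qed.
Lemma nrm1 : nrm D (1 : zsq D) = 1. Proof. by rewrite /nrm /= expr0n /= mulr0 subr0 expr1n. Qed.
Lemma nrmX x n : nrm D (x ^+ n) = nrm D x ^+ n.
Proof. by elim: n => [|n IH]; rewrite ?expr0 ?nrm1 // !exprS nrmM IH. Qed.
Lemma nrm_cj x : nrm D (cj x) = nrm D x.
Proof. by rewrite /nrm /cj /= sqrrN. Qed.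
Lemma nrm_sc a : nrm D (sc D a) = a ^+ 2.
Proof. by rewrite /nrm /= expr0n /= mulr0 subr0. Qed.
Lemma dv_cj c x : dv c x -> dv c (cj x).
Proof. by case/andP => h1 h2; rewrite /dv /= h1 zdN. Qed.
Lemma dv_nrm c x y : dv c (x - y) -> (c %| nrm D x - nrm D y)%Z.
Proof.
move=> h; rewrite -dv_sc scB -!mul_cj.
have -> : x * cj x - y * cj y = (x - y) * cj x + y * cj (x - y).
  by rewrite cjB; ring.
by apply: dvD; [apply: dvMl | apply: dvMr; apply: dv_cj].
Qed.
End DV.

Lemma modz_eqP (a b c : int) : (a %% c = b %% c)%Z <-> (c %| a - b)%Z.
Proof. by rewrite -eqz_mod_dvd; split => [->|/eqP]. Qed.

Lemma modz_dvd_mod (a c c' : int) : (c %| c')%Z -> (((a %% c')%Z %% c)%Z = (a %% c)%Z).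
Proof.
move=> h; apply/modz_eqP.
have -> : (a %% c')%Z - a = - ((a %/ c')%Z * c').
  by rewrite {2}(divz_eq a c'); ring.
by apply: zdN; apply: dvdz_mull.
Qed.

Section Bridge.
Variable p : nat.
Hypothesis p_gt0 : (0 < p)%N.

Lemma pk_gt0 n : 0 < pk p n.
Proof. by rewrite /pk exprn_gt0 // ltz_nat. Qed.
Lemma pk_neq0 n : pk p n != 0.
Proof. by rewrite lt0r_neq0 // pk_gt0. Qed.
Lemma pkS n : pk p n.+1 = pk p n * p%:Z.
Proof. by rewrite /pk exprSr. Qed.
Lemma pkD m n : pk p (m + n) = pk p m * pk p n.
Proof. by rewrite /pk exprD. Qed.
Lemma pk_dvd m n : (m <= n)%N -> (pk p m %| pk p n)%Z.
Proof. exact: dvdz_exp2l. Qed.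
Lemma pk0 : pk p 0 = 1. Proof. by []. Qed.
Lemma pk1 : pk p 1 = p%:Z. Proof. by rewrite /pk expr1. Qed.

Lemma coh_range a n : coh p a -> 0 <= a n < pk p n.
Proof.
move=> h; rewrite (h n) modz_ge0 ?pk_neq0 //=.
by rewrite ltz_pmod // pk_gt0.
Qed.

Lemma coh_step a n : coh p a -> (pk p n %| a n.+1 - a n)%Z.
Proof.
move=> h; apply/modz_eqP; rewrite -(h n) modz_small //.
exact: coh_range.
Qed.

Lemma coh_le a m n : coh p a -> (m <= n)%N -> (pk p m %| a n - a m)%Z.
Proof.
move=> h; elim: n => [|n IH].
  by rewrite leqn0 => /eqP->; rewrite subrr dvdz0.
rewrite leq_eqVlt => /orP[/eqP->|]; first by rewrite subrr dvdz0.
rewrite ltnS => hmn.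
have -> : a n.+1 - a m = (a n.+1 - a n) + (a n - a m) by ring.
apply: zdD; last exact: IH.
apply: dvdz_trans (coh_step n h); exact: pk_dvd.
Qed.

Definition red (n : nat) (x : int * int) : int * int :=
  ((x.1 %% pk p n)%Z, (x.2 %% pk p n)%Z).

Lemma red_eq n (x y : int * int) : red n x = red n y <-> dv (pk p n) (x - y).
Proof.
case: x => a b; case: y => e f; rewrite /red /dv /=; split.
  by case=> /modz_eqP -> /modz_eqP ->.
by case/andP => /modz_eqP -> /modz_eqP ->.
Qed.

Lemma red0 n (x : int * int) : red n x = (0, 0) <-> dv (pk p n) x.
Proof.
have -> : ((0 : int), (0 : int)) = red n 0 by rewrite /red /= mod0z.
by rewrite red_eq subr0.
Qed.

Lemma red_coh (z : nat -> int * int) n : cohO p z -> red n (z n) = z n.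
Proof.
case=> h1 h2; rewrite /red; case E: (z n) => [a b].
have r1 := coh_range n h1; have r2 := coh_range n h2; rewrite /= E /= in r1 r2.
by rewrite !modz_small.
Qed.

Lemma red_red n x : red n (red n x) = red n x.
Proof. by rewrite /red /= !modz_mod. Qed.

Lemma red_dv n x : dv (pk p n) (red n x - x).
Proof. by apply/red_eq; rewrite red_red. Qed.

Lemma inpk_sub (z w : nat -> int * int) n :
  in_pkO (Some n) (subO p z w) <-> dv (pk p n) (z n - w n).
Proof. by rewrite /in_pkO /subO; exact: (red0 n (z n - w n)). Qed.

Lemma cohO_le (z : nat -> int * int) m n : cohO p z -> (m <= n)%N ->
  dv (pk p m) (z n - z m).
Proof. by case=> h1 h2 hmn; apply/andP; split; [apply: (coh_le h1) | apply: (coh_le h2)]. Qed.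

Variable d : nat -> int.

Lemma mulO_lvl (z w : nat -> int * int) n :
  mulO p d z w n = red n ((z n : zsq (d n)) * w n).
Proof. by []. Qed.

Lemma powO_lvl lam m n :
  powO p d lam m n = red n ((lam n : zsq (d n)) ^+ m).
Proof.
elim: m => [|m IH]; first by rewrite /powO /= /oneO /red /= mod0z.
have -> : powO p d lam m.+1 = mulO p d lam (powO p d lam m) by [].
rewrite mulO_lvl IH; apply/red_eq; rewrite exprS.
set X := red n _.
have -> : (lam n : zsq (d n)) * X - (lam n : zsq (d n)) * (lam n : zsq (d n)) ^+ m
   = (lam n : zsq (d n)) * (X - (lam n : zsq (d n)) ^+ m) by ring.
apply: dvMr; exact: red_dv.
Qed.
End Bridge.

Lemma muld_transfer D D' c (x x' y y' : int * int) : (c %| D - D')%Z ->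
  dv c (x - x') -> dv c (y - y') -> dv c (muld D x y - muld D' x' y').
Proof.
move=> hD hx hy.
have -> : muld D x y - muld D' x' y' =
  ((x - x' : zsq D) * y + (x' : zsq D) * (y - y')) + sc D ((D - D') * (x'.2 * y'.2)).
  case: x x' y y' {hx hy} => [a b] [a' b'] [e f] [e' f'].
  rewrite !mulE /muld /sc /=; congr pair; simpl; ring.
apply: dvD; first by apply: dvD; [apply: dvMl | apply: dvMr].
by rewrite dv_sc; apply: dvdz_mulr.
Qed.

Lemma pow_transfer D D' c (x x' : int * int) e : (c %| D - D')%Z ->
  dv c (x - x') -> dv c ((x : zsq D) ^+ e - (x' : zsq D') ^+ e).
Proof.
move=> hD hx; elim: e => [|e IH].
  by rewrite !expr0 /dv /= subrr dvdz0.
rewrite !exprS !mulE; exact: muld_transfer.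
Qed.

Lemma natmul_pair D (y : zsq D) t : y *+ t = (y.1 *+ t, y.2 *+ t).
Proof.
elim: t => [|t IH]; first by rewrite !mulr0n.
by rewrite !mulrS IH addE.
Qed.

Lemma dvMn D c (x : zsq D) t : dv c x -> dv c (x *+ t).
Proof.
move=> h; elim: t => [|t IH]; first by rewrite mulr0n dv0.
by rewrite mulrS; apply: dvD.
Qed.

Lemma binom3 D (a : zsq D) n : exists c,
  (1 + a) ^+ n = 1 + a *+ n + a ^+ 2 *+ 'C(n, 2) + a ^+ 3 * c.
Proof.
elim: n => [|n [c IH]]; first by exists 0; rewrite expr0 !mulr0n mulr0 !addr0.
exists ('C(n, 2)%:R + c + c * a).
rewrite exprSr IH binS bin1 mulrnDr.
ring.
Qed.

Lemma pow_sub1 (c a : int) k : (c %| a - 1)%Z -> (c %| a ^+ k - 1)%Z.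
Proof.
move=> h; elim: k => [|k IH]; first by rewrite expr0 subrr dvdz0.
have -> : a ^+ k.+1 - 1 = a ^+ k * (a - 1) + (a ^+ k - 1) by rewrite exprS; ring.
by apply: zdD => //; apply: dvdz_mull.
Qed.

Section Core.
Variable p : nat.
Hypothesis pr : prime p.
Hypothesis p_gt2 : (2 < p)%N.
Variable D : int.
Let p_gt0 : (0 < p)%N := prime_gt0 pr.
Let P := p%:Z.

Lemma dv_pk_sc m n (z : zsq D) : (m <= n)%N -> dv (pk p m) (sc D (pk p n) * z).
Proof. by move=> h; apply: dv_trans (dv_scm _ _); apply: pk_dvd. Qed.

Lemma pk_ge m n : (m <= n)%N -> forall a : int, (pk p n %| a)%Z -> (pk p m %| a)%Z.
Proof. by move=> h a; apply: dvdz_trans; apply: pk_dvd. Qed.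

Lemma p_neq0 : P != 0.
Proof. by rewrite /P eqz_nat -lt0n. Qed.

Lemma coprime_p2 : coprimez P 2.
Proof.
rewrite coprimezE /P /= prime_coprime //.
apply/negP => /dvdn_leq h; have := h isT; lia.
Qed.

Lemma p_dvd_2x (x : int) : (P %| 2 * x)%Z -> (P %| x)%Z.
Proof. by rewrite Gauss_dvdzr // coprime_p2. Qed.

Lemma bin2p : exists h, 'C(p, 2) = (p * h)%N.
Proof.
have op : odd p by case: (even_prime pr) => // e; move: p_gt2; rewrite e.
exists p./2; rewrite bin2.
have E : p = (p./2).*2.+1 by rewrite -[p in LHS]odd_double_half op.
by rewrite [in p.-1]E /= -doubleMr doubleK.
Qed.

Lemma natr_sc n : (n%:R : zsq D) = sc D n%:Z.
Proof. by rewrite natmul_pair /sc /= mul0rn natz. Qed.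

Lemma pow_p_step j (y : zsq D) : (0 < j)%N ->
  dv (pk p j.+2) ((1 + sc D (pk p j) * y) ^+ p - 1 - sc D (pk p j.+1) * y).
Proof.
move=> j0; have [c ->] := binom3 (sc D (pk p j) * y) p.
set a := sc D (pk p j) * y.
have -> : 1 + a *+ p + a ^+ 2 *+ 'C(p, 2) + a ^+ 3 * c - 1 - sc D (pk p j.+1) * y
   = a ^+ 2 *+ 'C(p, 2) + a ^+ 3 * c.
  by rewrite pkS scM -natr_sc /a; ring.
have [h ->] := bin2p; rewrite mulrnA.
apply: dvD; first apply: dvMn.
  have -> : a ^+ 2 *+ p = sc D (pk p (j + j).+1) * y ^+ 2.
    by rewrite pkS pkD !scM -natr_sc /a; ring.
  by apply: dv_pk_sc; lia.
have -> : a ^+ 3 * c = sc D (pk p (j + j + j)) * (y ^+ 3 * c).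
  by rewrite !pkD !scM /a; ring.
by apply: dv_pk_sc; lia.
Qed.

Lemma Vlem K (mu : zsq D) : (0 < K)%N -> dv (pk p K) (mu - 1) ->
  ~~ dv (pk p K.+1) (mu - 1) -> forall i,
  dv (pk p (K + i)) (mu ^+ (p ^ i) - 1) && ~~ dv (pk p (K + i).+1) (mu ^+ (p ^ i) - 1).
Proof.
move=> K0 h1 h2; elim=> [|i /andP[IH1 IH2]]; first by rewrite addn0 expn0 expr1 h1.
have [y Ey] := dvP IH1.
have Enu : mu ^+ (p ^ i) = 1 + sc D (pk p (K + i)) * y by rewrite -Ey; ring.
have st := pow_p_step y (ltn_addr i K0).
rewrite expnSr exprM Enu !addnS.
apply/andP; split.
  have -> : (1 + sc D (pk p (K + i)) * y) ^+ p - 1 =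
    ((1 + sc D (pk p (K + i)) * y) ^+ p - 1 - sc D (pk p (K + i).+1) * y) +
    sc D (pk p (K + i).+1) * y by ring.
  apply: dvD; last exact: dv_scm.
  by apply: dv_trans st; apply: pk_dvd.
apply/negP => h3; move/negP: IH2; apply.
have h4 : dv (pk p (K + i).+2) (sc D (pk p (K + i).+1) * y).
  have -> : sc D (pk p (K + i).+1) * y =
    ((1 + sc D (pk p (K + i)) * y) ^+ p - 1) -
    ((1 + sc D (pk p (K + i)) * y) ^+ p - 1 - sc D (pk p (K + i).+1) * y) by ring.
  exact: dvB.
move: h4; rewrite [pk p (K + i).+2]pkS => /dv_scK h4.
have {h4} h4 := h4 (pk_neq0 p_gt0 _).
rewrite Ey pkS; exact: dv_scM.
Qed.

Lemma trace_p j (x : zsq D) : (0 < j)%N ->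
  (pk p j.+1 %| nrm D (1 + sc D (pk p j) * x) - 1)%Z -> (P %| x.1)%Z.
Proof.
move=> j0; rewrite sc_mul addE /nrm /=.
have -> : (1 + pk p j * x.1) ^+ 2 - D * (0 + pk p j * x.2) ^+ 2 - 1 =
   pk p j * (2 * x.1) + pk p (j + j) * (x.1 ^+ 2 - D * x.2 ^+ 2).
  by rewrite pkD; ring.
move=> h; apply: p_dvd_2x.
have : (pk p j.+1 %| pk p j * (2 * x.1))%Z.
  have -> : pk p j * (2 * x.1) = (pk p j * (2 * x.1) + pk p (j + j) * (x.1 ^+ 2 - D * x.2 ^+ 2))
     - pk p (j + j) * (x.1 ^+ 2 - D * x.2 ^+ 2) by ring.
  apply: rpredB => //; apply: dvdz_mulr; apply: pk_dvd; lia.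
by rewrite pkS dvdz_mul2l // pk_neq0.
Qed.

Lemma solve_t (x2 y2 : int) : ~~ (P %| y2)%Z -> exists t : nat, (P %| x2 - y2 *+ t)%Z.
Proof.
move=> hy.
have cop : coprimez y2 P.
  rewrite coprimezE coprime_sym prime_coprime //.
have [u [v Euv]] := Bezoutz y2 P.
move: cop; rewrite /coprimez => /eqP g1; rewrite g1 in Euv.
exists `|((u * x2) %% P)%Z|%N.
rewrite -mulr_natr natz gez0_abs; last by rewrite modz_ge0 // p_neq0.
have Em := divz_eq (u * x2) P.
have -> : x2 - y2 * ((u * x2) %% P)%Z = (x2 * v + y2 * ((u * x2) %/ P)%Z) * P.
  rewrite -{1}(mulr1 x2) -Euv.
  have -> : ((u * x2) %% P)%Z = u * x2 - ((u * x2) %/ P)%Z * P by rewrite {2}Em; ring.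
  ring.
by apply: dvdz_mull; apply: dvdzz.
Qed.

End Core.

Section Core2.
Variable p : nat.
Hypothesis pr : prime p.
Hypothesis p_gt2 : (2 < p)%N.
Variable D : int.
Let p_gt0 : (0 < p)%N := prime_gt0 pr.

Lemma core (M K : nat) (mu W : zsq D) : (0 < K)%N ->
  dv (pk p K) (mu - 1) -> ~~ dv (pk p K.+1) (mu - 1) ->
  (pk p M %| nrm D mu - 1)%Z ->
  dv (pk p K) (W - 1) -> (pk p M %| nrm D W - 1)%Z ->
  forall i, (K + i <= M)%N -> exists n, dv (pk p (K + i)) (mu ^+ n - W).
Proof.
move=> K0 hm1 hm2 hnm hW1 hnW; elim=> [|i IH] hiM.
  exists 0%N; rewrite addn0 expr0.
  have -> : 1 - W = - (W - 1) by ring.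
  exact: dvN.
have hiM' : (K + i <= M)%N by lia.
have [n hn] := IH hiM'.
rewrite addnS.
set j := (K + i)%N in hn hiM' hiM *.
have j0 : (0 < j)%N by rewrite /j; lia.
have hjM : (j.+1 <= M)%N by rewrite /j; lia.
have /andP[hv1 hv2] := Vlem pr p_gt2 K0 hm1 hm2 i.
rewrite -/j in hv1 hv2.
have [y Ey] := dvP hv1.
have Enu : mu ^+ (p ^ i) = 1 + sc D (pk p j) * y by rewrite -Ey; ring.
have hnnu : (pk p M %| nrm D (mu ^+ (p ^ i)) - 1)%Z by rewrite nrmX; apply: pow_sub1.
have y1 : (p%:Z %| y.1)%Z.
  apply: (trace_p pr p_gt2 j0); rewrite -Enu.
  by apply: pk_ge hnnu; apply: hjM.
have y2 : ~~ (p%:Z %| y.2)%Z.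
  apply/negP => y2; move/negP: hv2; apply.
  rewrite Ey pkS; apply: dv_scM; exact/andP.
set Mp := mu ^+ n.
have hnM : (pk p M %| nrm D Mp - 1)%Z by rewrite /Mp nrmX; apply: pow_sub1.
set V := W * cj Mp.
have hV1 : dv (pk p j) (V - 1).
  have -> : V - 1 = (W - Mp) * cj Mp + sc D (nrm D Mp - 1).
    by rewrite scB -mul_cj sc1 /V; ring.
  apply: dvD; first by apply: dvMl; rewrite -opprB; exact: dvN.
  by rewrite dv_sc; apply: pk_ge hnM; lia.
have [x Ex] := dvP hV1.
have EV : V = 1 + sc D (pk p j) * x by rewrite -Ex; ring.
have hnV : (pk p M %| nrm D V - 1)%Z.
  rewrite /V nrmM nrm_cj.
  have -> : nrm D W * nrm D Mp - 1 = (nrm D W - 1) * nrm D Mp + (nrm D Mp - 1) by ring.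
  by apply: zdD => //; apply: dvdz_mulr.
have x1 : (p%:Z %| x.1)%Z.
  apply: (trace_p pr p_gt2 j0); rewrite -EV.
  by apply: pk_ge hnV; apply: hjM.
have [t ht] := solve_t pr (x.2) y2.
exists (n + p ^ i * t)%N.
rewrite exprD exprM -/Mp Enu.
have [c Ec] := binom3 (sc D (pk p j) * y) t.
rewrite Ec.
set a := sc D (pk p j) * y.
have -> : Mp * (1 + a *+ t + a ^+ 2 *+ 'C(t, 2) + a ^+ 3 * c) - W =
    Mp * (sc D (pk p j) * (y *+ t - x)) + Mp * (a ^+ 2 *+ 'C(t, 2) + a ^+ 3 * c)
    + (Mp * (1 + sc D (pk p j) * x) - W).
  rewrite /a; ring.
have -> : Mp * (1 + sc D (pk p j) * x) - W = W * (sc D (nrm D Mp - 1)).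
  rewrite -EV /V scB -mul_cj sc1; ring.
apply: dvD; first apply: dvD.
- apply: dvMr; rewrite pkS; apply: dv_scM.
  rewrite natmul_pair /dv /=; apply/andP; split.
    by apply: rpredB => //; apply: rpredMn.
  have -> : y.2 *+ t - x.2 = - (x.2 - y.2 *+ t) by ring.
  exact: zdN.
- apply: dvMr; apply: dvD.
    apply: dvMn; rewrite /a.
    have -> : (sc D (pk p j) * y) ^+ 2 = sc D (pk p (j + j)) * y ^+ 2 by rewrite pkD scM; ring.
    apply: dv_pk_sc; lia.
  have -> : a ^+ 3 * c = sc D (pk p (j + j)) * (y ^+ 3 * c * sc D (pk p j)).
    by rewrite /a pkD scM; ring.
  apply: dv_pk_sc; lia.
- apply: dvMr; rewrite dv_sc; apply: pk_ge hnM; lia.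
Qed.
End Core2.
Section Count.
Variable F : finFieldType.
Variable Db : F.
Hypothesis two_nz : 2%:R != 0 :> F.
Hypothesis Db0 : Db != 0.

Definition nF (u : F * F) : F := u.1 ^+ 2 - Db * u.2 ^+ 2.
Definition fpar (u : F * F) : option F :=
  if u.1 == 1 then None else Some (u.2 / (u.1 - 1)).

Lemma nF1_snd (u : F * F) : nF u = 1 -> u.1 = 1 -> u = (1, 0).
Proof.
case: u => a b /=; rewrite /nF /= => h ea; subst a; congr pair.
have h' : Db * b ^+ 2 = 1 ^+ 2 - (1 ^+ 2 - Db * b ^+ 2) by ring.
move: h'; rewrite h expr1n subrr => /eqP; rewrite mulf_eq0 (negPf Db0) /=.
by rewrite expf_eq0 /= => /eqP.
Qed.

Lemma fpar_inj : {in [set u | nF u == 1] &, injective fpar}.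
Proof.
move=> u v; rewrite !inE => /eqP hu /eqP hv; rewrite /fpar.
case: eqP => u1; case: eqP => v1 //.
- by move=> _; rewrite (nF1_snd hu u1) (nF1_snd hv v1).
case=> ht; set t := u.2 / (u.1 - 1) in ht.
have u10 : u.1 - 1 != 0 by rewrite subr_eq0; apply/eqP.
have v10 : v.1 - 1 != 0 by rewrite subr_eq0; apply/eqP.
have Eu2 : u.2 = t * (u.1 - 1) by rewrite /t divfK.
have Ev2 : v.2 = t * (v.1 - 1) by rewrite ht divfK.
have key (w : F * F) : nF w = 1 -> w.1 - 1 != 0 -> w.2 = t * (w.1 - 1) ->
    w.1 + 1 = Db * t ^+ 2 * (w.1 - 1).
  move=> hw w0 Ew; apply: (mulfI w0).
  have : w.1 ^+ 2 - Db * w.2 ^+ 2 = 1 by [].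
  rewrite Ew => h.
  apply/eqP; rewrite -subr_eq0; apply/eqP.
  transitivity ((w.1 ^+ 2 - Db * (t * (w.1 - 1)) ^+ 2) - 1); first ring.
  by rewrite h subrr.
have ku := key u hu u10 Eu2; have kv := key v hv v10 Ev2.
have E1 : u.1 = v.1.
  apply/eqP; rewrite -subr_eq0; apply/eqP.
  have : (u.1 - v.1) * (1 - Db * t ^+ 2) = 0.
    have -> : (u.1 - v.1) * (1 - Db * t ^+ 2) =
      (u.1 + 1 - Db * t ^+ 2 * (u.1 - 1)) - (v.1 + 1 - Db * t ^+ 2 * (v.1 - 1)) by ring.
    by rewrite ku kv !subrr.
  move/eqP; rewrite mulf_eq0 => /orP[/eqP //|/eqP h2].
  have h3 : Db * t ^+ 2 = 1 by apply/eqP; rewrite eq_sym -subr_eq0 h2.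
  move: ku; rewrite h3 mul1r => /eqP; rewrite -subr_eq0.
  have -> : u.1 + 1 - (u.1 - 1) = 2%:R by ring.
  by rewrite (negPf two_nz).
have E2 : u.2 = v.2 by rewrite Eu2 Ev2 E1.
by move: E1 E2; case: (u) => a b; case: (v) => c e /= -> ->.
Qed.

Definition mF (u w : F * F) : F * F := (u.1 * w.1 + Db * (u.2 * w.2), u.1 * w.2 + u.2 * w.1).
Definition cjF (w : F * F) : F * F := (w.1, - w.2).

Lemma nF_mF u w : nF (mF u w) = nF u * nF w.
Proof. by rewrite /nF /mF /=; ring. Qed.
Lemma nF_cjF w : nF (cjF w) = nF w.
Proof. by rewrite /nF /cjF /= sqrrN. Qed.

Lemma mF_inj g : nF g = -1 -> injective (fun u => mF u (cjF g)).
Proof.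
move=> hg u v; rewrite /mF /cjF /= => -[h1 h2].
have hg' : g.1 ^+ 2 - Db * g.2 ^+ 2 = -1 by [].
set a := u.1 - v.1; set b := u.2 - v.2.
have e1 : a * g.1 - Db * b * g.2 = 0.
  apply/eqP; rewrite subr_eq0 /a /b; apply/eqP.
  transitivity ((u.1 * g.1 + Db * (u.2 * - g.2)) - (v.1 * g.1 + Db * (v.2 * - g.2)) + Db * b * g.2); first by rewrite /b; ring.
  by rewrite h1 subrr add0r.
have e2 : b * g.1 - a * g.2 = 0.
  transitivity ((u.1 * - g.2 + u.2 * g.1) - (v.1 * - g.2 + v.2 * g.1)); first by rewrite /a /b; ring.
  by rewrite h2 subrr.
have ea : a = 0.
  transitivity (- (g.1 * (a * g.1 - Db * b * g.2) + Db * g.2 * (b * g.1 - a * g.2))).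
    transitivity (- (a * (g.1 ^+ 2 - Db * g.2 ^+ 2))); first by rewrite hg'; ring.
    ring.
  by rewrite e1 e2; ring.
have eb : b = 0.
  transitivity (- (g.1 * (b * g.1 - a * g.2) + g.2 * (a * g.1 - Db * b * g.2))).
    transitivity (- (b * (g.1 ^+ 2 - Db * g.2 ^+ 2))); first by rewrite hg'; ring.
    ring.
  by rewrite e1 e2; ring.
move/eqP: ea; rewrite subr_eq0 => /eqP ea.
move/eqP: eb; rewrite subr_eq0 => /eqP eb.
by move: ea eb; case: (u) => ? ?; case: (v) => ? ? /= -> ->.
Qed.

Lemma card_S : leq #|[set u | (nF u == 1) || (nF u == -1)]| (2 * #|F|.+1)%N.
Proof.
set S1 := [set u | nF u == 1]; set Sm := [set u | nF u == -1].
have -> : [set u | (nF u == 1) || (nF u == -1)] = S1 :|: Sm.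
  by apply/setP => u; rewrite !inE.
have c1 : (#|S1| <= #|F|.+1)%N.
  have := @leq_card_in _ _ fpar _ fpar_inj. by rewrite card_option.
have c2 : (#|Sm| <= #|S1|)%N.
  case: (set_0Vmem Sm) => [->|[g]]; first by rewrite cards0.
  rewrite inE => /eqP hg.
  rewrite -(card_imset Sm (mF_inj hg)); apply: subset_leq_card.
  apply/subsetP => x /imsetP[u]; rewrite !inE => /eqP hu ->.
  by rewrite nF_mF nF_cjF hu hg mulrNN mulr1.
apply: leq_trans (leq_card_setU _ _).1 _.
lia.
Qed.
End Count.

Definition sign (e : int) := e = 1 \/ e = -1.
Lemma signX e n : sign e -> sign (e ^+ n).
Proof.
case=> ->; first by left; rewrite expr1n.
by rewrite -signr_odd; case: (odd n); [right; rewrite expr1|left; rewrite expr0].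
Qed.
Lemma sign_sq e : sign e -> e * e = 1.
Proof. by case=> ->. Qed.
Lemma sign_eq (p : nat) e e' : (2 < p)%N -> sign e -> sign e' -> (p%:Z %| e - e')%Z -> e = e'.
Proof.
move=> p2; case=> ->; case=> -> //.
  have -> : (1 - -1 : int) = 2%:Z by []. 
  by rewrite dvdzE /= => /dvdn_leq h; have := h isT; lia.
have -> : (-1 - 1 : int) = - 2%:Z by [].
by rewrite dvdzE abszN /= => /dvdn_leq h; have := h isT; lia.
Qed.
Lemma powz_cong (c a b : int) n : (c %| a - b)%Z -> (c %| a ^+ n - b ^+ n)%Z.
Proof.
move=> h; elim: n => [|n IH]; first by rewrite !expr0 subrr dvdz0.
have -> : a ^+ n.+1 - b ^+ n.+1 = a ^+ n * (a - b) + b * (a ^+ n - b ^+ n) by rewrite !exprS; ring.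
by apply: zdD; [apply: dvdz_mull | apply: dvdz_mull].
Qed.
Lemma dv_sym c (x y : int * int) : dv c (x - y) = dv c (y - x).
Proof.
apply/idP/idP => h; have := @dvN 0 c _ h; by rewrite opprB.
Qed.
Lemma dv_pow1 D c (x : zsq D) n : dv c (x - 1) -> dv c (x ^+ n - 1).
Proof.
move=> h; elim: n => [|n IH]; first by rewrite expr0 subrr dv0.
have -> : x ^+ n.+1 - 1 = x ^+ n * (x - 1) + (x ^+ n - 1) by rewrite exprS; ring.
by apply: dvD => //; apply: dvMr.
Qed.
Lemma dv_powmod D c (x : zsq D) l n : (0 < l)%N -> dv c (x ^+ l - 1) ->
  dv c (x ^+ n - x ^+ (n %% l)).
Proof.
move=> l0 h; rewrite {1}(divn_eq n l) exprD mulnC exprM.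
have -> : (x ^+ l) ^+ (n %/ l) * x ^+ (n %% l) - x ^+ (n %% l) =
  ((x ^+ l) ^+ (n %/ l) - 1) * x ^+ (n %% l) by ring.
by apply: dvMl; apply: dv_pow1.
Qed.
Lemma nrm_transfer D D' c (x x' : int * int) : (c %| D - D')%Z -> dv c (x - x') ->
  (c %| nrm D x - nrm D' x')%Z.
Proof.
move=> hD hx.
have -> : nrm D x - nrm D' x' = (nrm D x - nrm D x') - (D - D') * x'.2 ^+ 2 by rewrite /nrm; ring.
apply: rpredB; first exact: (dv_nrm (D := D) hx).
exact: dvdz_mulr.
Qed.

Section Main.
Variable p : nat.
Hypothesis pr : prime p.
Hypothesis p_gt2 : (2 < p)%N.
Let p_gt0 : (0 < p)%N := prime_gt0 pr.
Variable d : nat -> int.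
Hypothesis hd : coh p d.
Variable lam : nat -> int * int.
Hypothesis lamc : cohO p lam.

Local Notation L m := (lam m : zsq (d m)).

Lemma Ltr m n e : (m <= n)%N -> dv (pk p m) ((L n) ^+ e - (L m) ^+ e).
Proof.
move=> h; apply: pow_transfer; first exact: coh_le.
exact: cohO_le.
Qed.

Lemma dv_red_sub m (X Y : int * int) : dv (pk p m) (red p m X - Y) = dv (pk p m) (X - Y).
Proof.
have E : (red p m X - Y : zsq 0) = (red p m X - X : zsq 0) + (X - Y : zsq 0) by ring.
apply/idP/idP => h.
  have -> : (X - Y : zsq 0) = (red p m X - Y : zsq 0) - (red p m X - X : zsq 0) by ring.
  by apply: dvB => //; apply: red_dv.
by rewrite E; apply: dvD => //; apply: red_dv.
Qed.

Lemma inpk_powz (z : nat -> int * int) m e :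
  in_pkO (Some m) (subO p (powO p d lam e) z) <-> dv (pk p m) ((L m) ^+ e - z m).
Proof. by rewrite inpk_sub powO_lvl dv_red_sub. Qed.

Lemma inpk_zpow (z : nat -> int * int) m e :
  in_pkO (Some m) (subO p z (powO p d lam e)) <-> dv (pk p m) (z m - (L m) ^+ e).
Proof. by rewrite inpk_sub powO_lvl dv_sym dv_red_sub dv_sym. Qed.

Lemma inpk_pow1 m e :
  in_pkO (Some m) (subO p (powO p d lam e) (oneO p)) <-> dv (pk p m) ((L m) ^+ e - 1).
Proof.
rewrite inpk_powz.
have -> : oneO p m = red p m (1 : zsq (d m)) by rewrite /oneO /red /= mod0z.
by rewrite dv_sym dv_red_sub dv_sym.
Qed.

Lemma U0_norm z : U0 p d z -> exists2 e, sign e & forall m, (pk p m %| nrm (d m) (z m) - e)%Z.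
Proof.
case=> _ [_ [] h]; [exists 1; first by left | exists (-1); first by right];
  move=> m; have := congr1 (fun f => f m) h; rewrite /normO /oneZp /m1Zp => /modz_eqP.
  by [].
by [].
Qed.

Lemma coh_scale (a : nat -> int) (s : int) : coh p a -> coh p (fun m => (s * a m) %% pk p m)%Z.
Proof.
move=> h m /=; rewrite modz_dvd_mod; last by rewrite pkS dvdz_mulr.
apply/modz_eqP.
have -> : s * a m - s * a m.+1 = - (s * (a m.+1 - a m)) by ring.
apply: zdN.
apply: dvdz_mull; exact: coh_step.
Qed.

Lemma U0_of z e : cohO p z -> sign e -> (forall m, (pk p m %| nrm (d m) (z m) - e)%Z) -> U0 p d z.
Proof.
move=> zc se hn; split => //; split.
  case: (zc) => c1 c2.
  exists (fun m => (((e * (z m).1) %% pk p m)%Z, (((- e) * (z m).2) %% pk p m)%Z)).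
  split; first by split; [apply: (coh_scale e c1) | apply: (coh_scale (- e) c2)].
  apply: functional_extensionality => m.
  rewrite mulO_lvl /=.
  have -> : oneO p m = red p m (1 : zsq (d m)) by rewrite /oneO /red /= mod0z.
  apply/red_eq.
  set w := (_, _).
  have Ew : w = red p m (sc (d m) e * cj (z m)).
    by rewrite sc_mul /red /w /cj /=; congr pair; congr modz; ring.
  have -> : (z m : zsq (d m)) * w - 1 =
     (z m : zsq (d m)) * (w - sc (d m) e * cj (z m)) + sc (d m) e * sc (d m) (nrm (d m) (z m) - e)
     + (sc (d m) (e * e) - 1).
    rewrite scB -mul_cj scM; ring.
  rewrite sign_sq // sc1 subrr addr0.
  apply: dvD; first by apply: dvMr; rewrite Ew; apply: red_dv.
  by apply: dvMr; rewrite dv_sc.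
case: se hn => -> hn; [left | right]; apply: functional_extensionality => m;
  rewrite /normO /oneZp /m1Zp; apply/modz_eqP; exact: hn.
Qed.

Variable l : nat.
Hypothesis hord : order_modp p d lam l.
Variable eps : int.
Hypothesis seps : sign eps.
Hypothesis heps : forall m, (pk p m %| nrm (d m) (lam m) - eps)%Z.


Lemma nrmLi m i : (pk p m %| nrm (d m) ((L m) ^+ i) - eps ^+ i)%Z.
Proof. by rewrite nrmX; apply: powz_cong. Qed.

Lemma hl0 : (0 < l)%N. Proof. by case: hord. Qed.
Lemma hl1 : dv (pk p 1) ((L 1) ^+ l - 1).
Proof. by case: hord => _ [/inpk_pow1 h _]. Qed.
Lemma hmin m : (0 < m < l)%N -> ~~ dv (pk p 1) ((L 1) ^+ m - 1).
Proof. by case: hord => _ [_ h] hm; apply/negP => /inpk_pow1; apply: h. Qed.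

Lemma distinct i j : (i < l)%N -> (j < l)%N -> dv (pk p 1) ((L 1) ^+ i - (L 1) ^+ j) -> i = j.
Proof.
wlog hij : i j / (i <= j)%N.
  move=> W il jl h; case: (leqP i j) => hh; first exact: W.
  by apply/esym; apply: W => //; [apply: ltnW | rewrite dv_sym].
move=> il jl h; move: hij; rewrite leq_eqVlt => /orP[/eqP // | hlt].
exfalso.
have hm : (0 < j - i < l)%N by apply/andP; split; lia.
move/negP: (hmin hm); apply.
set U := L 1.
have E : U ^+ j = U ^+ i * U ^+ (j - i) by rewrite -exprD subnKC // ltnW.
set s := eps ^+ i.
have ss : sign s := signX i seps.
have h2 : dv (pk p 1) (sc (d 1) (nrm (d 1) (U ^+ i)) * (U ^+ (j - i) - 1)).
  rewrite -mul_cj.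
  have -> : U ^+ i * cj (U ^+ i) * (U ^+ (j - i) - 1) = - (cj (U ^+ i) * (U ^+ i - U ^+ j)) by rewrite E; ring.
  by apply: dvN; apply: dvMr.
have h3 : dv (pk p 1) (sc (d 1) s * (U ^+ (j - i) - 1)).
  have -> : sc (d 1) s * (U ^+ (j - i) - 1) =
     sc (d 1) (nrm (d 1) (U ^+ i)) * (U ^+ (j - i) - 1) - sc (d 1) (nrm (d 1) (U ^+ i) - s) * (U ^+ (j - i) - 1).
    by rewrite [sc _ (_ - s)]scB; ring.
  apply: dvB => //; apply: dvMl; rewrite dv_sc; exact: nrmLi.
have -> : U ^+ (j - i) - 1 = sc (d 1) s * (sc (d 1) s * (U ^+ (j - i) - 1)).
  by rewrite mulrA -scM sign_sq // sc1 mul1r.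
by apply: dvMr.
Qed.

Lemma zL_tr (z : nat -> int * int) m n i : cohO p z -> (m <= n)%N ->
  dv (pk p n) (z n - (L n) ^+ i) -> dv (pk p m) (z m - (L m) ^+ i).
Proof.
move=> zc hmn h.
have -> : (z m - (L m) ^+ i : zsq (d m)) =
   ((z m - z n : zsq (d m)) + (z n - (L n) ^+ i : zsq (d n))) + ((L n) ^+ i - (L m) ^+ i : zsq (d m)).
  rewrite ?subE ?addE /=; congr pair; ring.
apply: dvD; last exact: Ltr.
apply: dvD; last exact: (dv_trans (pk_dvd p hmn) h).
by rewrite dv_sym; apply: cohO_le.
Qed.

Lemma closure_lvl z m : in_closure p d lam z -> exists n, dv (pk p m) ((L m) ^+ n - z m).
Proof. by move=> h; have [n /inpk_powz hn] := h m; exists n. Qed.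

Lemma closure_U0 z : cohO p z -> in_closure p d lam z -> U0 p d z.
Proof.
move=> zc hc.
have [n1 h1] := closure_lvl 1 hc.
apply: (U0_of zc (signX n1 seps)) => m.
case: m => [|m]; first by rewrite pk0 dvd1z.
have [nm hm] := closure_lvl m.+1 hc.
have a1 : (pk p m.+1 %| nrm (d m.+1) (z m.+1) - eps ^+ nm)%Z.
  have -> : nrm (d m.+1) (z m.+1) - eps ^+ nm =
     (nrm (d m.+1) (z m.+1) - nrm (d m.+1) ((L m.+1) ^+ nm)) + (nrm (d m.+1) ((L m.+1) ^+ nm) - eps ^+ nm) by ring.
  apply: zdD; last exact: nrmLi.
  by apply: (dv_nrm (D := d m.+1)); rewrite dv_sym.
suff -> : eps ^+ n1 = eps ^+ nm by [].
apply: (sign_eq p_gt2 (signX _ seps) (signX _ seps)).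
rewrite -pk1.
have -> : eps ^+ n1 - eps ^+ nm =
  (eps ^+ n1 - nrm (d 1) ((L 1) ^+ n1)) + (nrm (d 1) ((L 1) ^+ n1) - nrm (d 1) (z 1))
  + (nrm (d 1) (z 1) - nrm (d m.+1) (z m.+1)) + (nrm (d m.+1) (z m.+1) - eps ^+ nm) by ring.
apply: zdD; last by apply: pk_ge a1.
apply: zdD; last first.
  apply: nrm_transfer; first by rewrite -opprB; apply: zdN; apply: coh_le.
  by rewrite dv_sym; apply: cohO_le.
apply: zdD.
  by rewrite -opprB; apply: zdN; apply: nrmLi.
exact: (dv_nrm (D := d 1)).
Qed.

Lemma zL_up (z : nat -> int * int) m n i : cohO p z -> (m <= n)%N ->
  dv (pk p m) (z m - (L m) ^+ i) -> dv (pk p m) (z n - (L n) ^+ i).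
Proof.
move=> zc hmn h.
have -> : (z n - (L n) ^+ i : zsq (d n)) =
   ((z n - z m : zsq (d m)) + (z m - (L m) ^+ i : zsq (d m))) - ((L n) ^+ i - (L m) ^+ i : zsq (d m)).
  rewrite ?subE ?addE /=; congr pair; ring.
apply: dvB; last exact: Ltr.
apply: dvD => //; exact: cohO_le.
Qed.

Lemma L1_up m n e : (m <= n)%N -> dv (pk p m) ((L m) ^+ e - 1) -> dv (pk p m) ((L n) ^+ e - 1).
Proof.
move=> hmn h.
have -> : ((L n) ^+ e - 1 : zsq (d n)) =
   ((L n) ^+ e - (L m) ^+ e : zsq (d m)) + ((L m) ^+ e - 1 : zsq (d m)).
  rewrite ?subE ?addE /=; congr pair; ring.
by apply: dvD => //; apply: Ltr.
Qed.

Lemma L1_down m n e : (m <= n)%N -> dv (pk p m) ((L n) ^+ e - 1) -> dv (pk p m) ((L m) ^+ e - 1).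
Proof.
move=> hmn h.
have -> : ((L m) ^+ e - 1 : zsq (d m)) =
   ((L n) ^+ e - 1 : zsq (d n)) - ((L n) ^+ e - (L m) ^+ e : zsq (d m)).
  rewrite ?subE ?addE /=; congr pair; ring.
by apply: dvB => //; apply: Ltr.
Qed.

Lemma z_close z m n : dv (pk p m) ((L m) ^+ n - z m) -> dv (pk p m) ((L m) ^+ l - 1) ->
  dv (pk p m) (z m - (L m) ^+ (n %% l)).
Proof.
move=> h hl.
have -> : (z m - (L m) ^+ (n %% l) : zsq (d m)) =
   - ((L m) ^+ n - z m) + ((L m) ^+ n - (L m) ^+ (n %% l)) by ring.
apply: dvD; first exact: dvN.
exact: dv_powmod hl0 hl.
Qed.

Lemma fwd_some K z : dv (pk p K) ((L K) ^+ l - 1) -> cohO p z -> in_closure p d lam z ->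
  exists2 i, (i < l)%N & in_piece p d lam (Some K) i z.
Proof.
move=> hK zc hc; have [n hn] := closure_lvl K hc.
exists ((n %% l)%N); first by rewrite ltn_mod hl0.
split; last exact: closure_U0.
by apply/inpk_zpow; apply: z_close.
Qed.

Lemma fwd_none z : (forall m, dv (pk p m) ((L m) ^+ l - 1)) -> cohO p z -> in_closure p d lam z ->
  exists2 i, (i < l)%N & in_piece p d lam None i z.
Proof.
move=> hN zc hc; have [n1 hn1] := closure_lvl 1 hc.
exists ((n1 %% l)%N); first by rewrite ltn_mod hl0.
split; last exact: closure_U0.
move=> m; apply/(inpk_zpow z m ((n1 %% l)%N)).
have [nm hnm] := closure_lvl m hc.
have h := z_close hnm (hN m).
case: m h {hnm} => [|m] h; first by rewrite /dv pk0 !dvd1z.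
suff <- : (nm %% l = n1 %% l)%N by [].
apply: distinct; rewrite ?ltn_mod ?hl0 //.
have h1 := zL_tr zc (isT : (1 <= m.+1)%N) h.
have h2 := z_close hn1 (hN 1).
have -> : ((L 1) ^+ ((nm %% l)%N) - (L 1) ^+ ((n1 %% l)%N) : zsq (d 1)) =
   (z 1 - (L 1) ^+ ((n1 %% l)%N) : zsq (d 1)) - (z 1 - (L 1) ^+ ((nm %% l)%N)) by ring.
exact: dvB.
Qed.

Lemma bwd_none z i : in_piece p d lam None i z -> in_closure p d lam z.
Proof.
case=> hp _ m; exists i; apply/inpk_powz.
rewrite dv_sym; exact: ((inpk_zpow z m i).1 (hp m)).
Qed.

Lemma bwd_some K z i : (0 < K)%N -> dv (pk p K) ((L K) ^+ l - 1) ->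
  ~~ dv (pk p K.+1) ((L K.+1) ^+ l - 1) ->
  in_piece p d lam (Some K) i z -> in_closure p d lam z.
Proof.
move=> K0 hK1 hK2 [hp hU] m.
suff [n hn] : exists n, dv (pk p m) ((L m) ^+ n - z m) by exists n; apply/inpk_powz.
have zc : cohO p z by case: hU.
have [sg ssg hsg] := U0_norm hU.
have hz := (inpk_zpow z K i).1 hp.
case: (leqP m K) => hmK.
  by exists i; rewrite dv_sym; exact: zL_tr zc hmK hz.
have hzm := zL_up zc (ltnW hmK) hz.
have p1K : (pk p 1 %| pk p K)%Z by apply: pk_dvd.
have p1m : (pk p 1 %| pk p m)%Z by apply: pk_dvd; lia.
set X := (L m) ^+ i.
set Z := (z m : zsq (d m)).
have hm1 : dv (pk p K) ((L m) ^+ l - 1) by apply: L1_up (ltnW hmK) hK1.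
have hm2 : ~~ dv (pk p K.+1) ((L m) ^+ l - 1).
  by apply/negP => h; move/negP: hK2; apply; apply: L1_down hmK h.
have el : eps ^+ l = 1.
  apply: (sign_eq p_gt2 (signX _ seps)); first by left.
  rewrite -pk1.
  have -> : eps ^+ l - 1 = - (nrm (d m) ((L m) ^+ l) - eps ^+ l) + (nrm (d m) ((L m) ^+ l) - nrm (d m) (1 : zsq (d m))).
    by rewrite nrm1; ring.
  apply: zdD; first by apply: zdN; apply: dvdz_trans p1m (nrmLi m l).
  by apply: (dv_nrm (D := d m)); apply: dv_trans p1K hm1.
have hnm : (pk p m %| nrm (d m) ((L m) ^+ l) - 1)%Z by rewrite -el; apply: nrmLi.
set s := eps ^+ i.
have ss : sign s := signX i seps.
have hX : (pk p m %| nrm (d m) X - s)%Z by apply: nrmLi.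
have esg : sg = s.
  apply: (sign_eq p_gt2 ssg ss); rewrite -pk1.
  have -> : sg - s = - (nrm (d m) Z - sg) + (nrm (d m) Z - nrm (d m) X) + (nrm (d m) X - s) by ring.
  apply: zdD; last exact: dvdz_trans p1m hX.
  apply: zdD; first by apply: zdN; apply: dvdz_trans p1m (hsg m).
  by apply: (dv_nrm (D := d m)); apply: dv_trans p1K hzm.
set W := sc (d m) s * Z * cj X.
have hW1 : dv (pk p K) (W - 1).
  have -> : W - 1 = sc (d m) s * (Z - X) * cj X + sc (d m) s * sc (d m) (nrm (d m) X - s)
      + (sc (d m) (s * s) - 1).
    by rewrite /W [sc _ (_ - s)]scB scM -mul_cj; ring.
  rewrite sign_sq // sc1 subrr addr0.
  apply: dvD; first by apply: dvMl; apply: dvMr.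
  apply: dvMr; rewrite dv_sc; exact: dvdz_trans (pk_dvd p (ltnW hmK)) hX.
have hnW : (pk p m %| nrm (d m) W - 1)%Z.
  rewrite /W !nrmM nrm_cj nrm_sc expr2 sign_sq // mul1r.
  have -> : nrm (d m) Z * nrm (d m) X - 1 =
     (nrm (d m) Z - sg) * nrm (d m) X + sg * (nrm (d m) X - s) + (sg * s - 1) by ring.
  rewrite esg sign_sq // subrr addr0.
  apply: zdD; first by apply: dvdz_mulr; rewrite -esg; apply: hsg.
  by apply: dvdz_mull.
have hKm : (K + (m - K) <= m)%N by lia.
have [n hn] := core pr p_gt2 K0 hm1 hm2 hnm hW1 hnW hKm.
rewrite subnKC in hn; last exact: ltnW.
exists (l * n + i)%N.
rewrite exprD exprM -/X.
have -> : ((L m) ^+ l) ^+ n * X - Z = (((L m) ^+ l) ^+ n - W) * X +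
     Z * (sc (d m) s * sc (d m) (nrm (d m) X - s)) + Z * (sc (d m) (s * s) - 1).
  by rewrite /W [sc _ (_ - s)]scB scM -mul_cj; ring.
rewrite sign_sq // sc1 subrr mulr0 addr0.
apply: dvD; first exact: dvMl.
by apply: dvMr; apply: dvMr; rewrite dv_sc.
Qed.

Lemma piece_lvl1 k i z : (forall K, k = Some K -> (0 < K)%N) ->
  in_piece p d lam k i z -> dv (pk p 1) (z 1 - (L 1) ^+ i).
Proof.
move=> hk [hp hU]; have zc : cohO p z by case: hU.
case: k hk hp => [K|] hk hp.
  have := (inpk_zpow z K i).1 hp; apply: zL_tr => //; exact: hk.
exact: ((inpk_zpow z 1 i).1 (hp 1)).
Qed.

Lemma Fp_eq0 (c : int) : ((c%:~R : 'F_p) == 0) = (p%:Z %| c)%Z.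
Proof.
have ch := pchar_Fp pr.
case: c => n.
  by rewrite -pmulrn -(dvdn_pcharf ch) dvdzE.
rewrite NegzE mulrNz oppr_eq0 -pmulrn -(dvdn_pcharf ch).
by rewrite dvdzE abszN.
Qed.

Definition piF (x : int * int) : 'F_p * 'F_p := (x.1%:~R, x.2%:~R).

Lemma piF_eq (x y : int * int) : (piF x == piF y) = dv (pk p 1) (x - y).
Proof.
rewrite pk1 /piF /dv xpair_eqE -!Fp_eq0 !intrB !subr_eq0.
by [].
Qed.

Lemma nF_piF (x : int * int) : nF ((d 1)%:~R) (piF x) = (nrm (d 1) x)%:~R.
Proof. by rewrite /nF /nrm /piF /= !expr2 intrB !intrM. Qed.

Lemma sign_F (e : int) (x : int * int) : sign e -> (p%:Z %| nrm (d 1) x - e)%Z ->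
  piF x \in [set u | (nF ((d 1)%:~R) u == 1) || (nF ((d 1)%:~R) u == -1)].
Proof.
move=> se h; rewrite inE nF_piF.
have : ((nrm (d 1) x)%:~R : 'F_p) = e%:~R.
  by apply/eqP; rewrite -subr_eq0 -intrB Fp_eq0.
by case: se => -> ->; rewrite ?eqxx ?orbT.
Qed.

Lemma count_main z : d 1 <> 0 -> l = (2 * (p + 1))%N -> U0 p d z ->
  exists2 i, (i < l)%N & dv (pk p 1) (z 1 - (L 1) ^+ i).
Proof.
move=> hd1 hl hU.
have [sg ssg hsg] := U0_norm hU.
set Db := ((d 1)%:~R : 'F_p).
have two_nz : (2%:R : 'F_p) != 0.
  rewrite -(dvdn_pcharf (pchar_Fp pr)); apply/negP => /dvdn_leq h; have := h isT; lia.
have Db0 : Db != 0.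
  rewrite /Db Fp_eq0; apply/negP => h.
  have := @coh_range p p_gt0 d 1 hd; rewrite pk1 => r.
  by move/dvdz_mod0P: h; rewrite modz_small.
set S := [set u | (nF Db u == 1) || (nF Db u == -1)].
pose f := fun i : 'I_l => piF ((L 1) ^+ i).
have finj : injective f.
  move=> i j /eqP; rewrite piF_eq => h; apply: ord_inj; exact: distinct.
set Pset := [set f i | i in 'I_l].
have cP : #|Pset| = l by rewrite card_imset // card_ord.
have PS : Pset \subset S.
  apply/subsetP => u /imsetP[i _ ->]; apply: (sign_F (signX i seps)); rewrite -pk1; exact: nrmLi.
have zS : piF (z 1) \in S by apply: (sign_F ssg); rewrite -pk1; exact: hsg.
case: (boolP (piF (z 1) \in Pset)) => [/imsetP[i _ E] | hn].
  by exists i => //; rewrite -piF_eq E.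
exfalso.
have : (#|piF (z 1) |: Pset| <= #|S|)%N.
  apply: subset_leq_card; apply/subsetP => u; rewrite in_setU1 => /orP[/eqP->|]; first exact: zS.
  exact: (subsetP PS).
rewrite cardsU1 hn cP.
have := card_S two_nz Db0; rewrite card_Fp // => h1 h2.
rewrite -/S in h1; move: h2 => /= h2; have := leq_trans h2 h1; rewrite hl; lia.
Qed.
End Main.

Theorem theorem7 (p : nat) (d : nat -> int) (lam : nat -> int * int) (l : nat)
    (k : option nat) :
  prime p -> (2 < p)%N ->
  coh p d -> d 1%N <> 0 -> nonsquareZp p d ->
  U0 p d lam -> order_modp p d lam l ->
  nuO (subO p (powO p d lam l) (oneO p)) k ->
  (forall z, cohO p z ->
     (in_closure p d lam z <-> exists2 i, (i < l)%N & in_piece p d lam k i z)) /\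
  (forall i j z, (i < l)%N -> (j < l)%N -> i <> j ->
     in_piece p d lam k i z -> in_piece p d lam k j z -> False) /\
  (l = (2 * (p + 1))%N -> k = Some 1%N ->
     forall z, cohO p z -> (in_closure p d lam z <-> U0 p d z)).
Proof.
move=> pr p2 hd hd1 _ hlam hord hk.
have lamc : cohO p lam by case: hlam.
have [eps seps heps] := U0_norm hlam.
have hK0 : forall K, k = Some K -> (0 < K)%N.
  move=> K ek; subst k; case: hk => h0 h1.
  case: K h0 h1 => // h0 h1; exfalso; apply: h1.
  by case: hord => _ [h _].
have part1 : forall z, cohO p z ->
    (in_closure p d lam z <-> exists2 i, (i < l)%N & in_piece p d lam k i z).
  move=> z zc; split.
    case: k hk hK0 => [K|] hk hK0 hc.
      apply: (fwd_some pr p2 hd hord seps heps _ zc hc).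
      exact: ((inpk_pow1 _ _ _ _ _).1 hk.1).
    apply: (fwd_none pr p2 hd lamc hord seps heps _ zc hc) => m.
    exact: ((inpk_pow1 _ _ _ _ _).1 (hk m)).
  case=> i il hpc; case: k hk hK0 hpc => [K|] hk hK0 hpc.
    apply: (bwd_some pr p2 hd lamc seps heps (hK0 K erefl) _ _ hpc).
      exact: ((inpk_pow1 _ _ _ _ _).1 hk.1).
    by apply/negP => /(inpk_pow1 _ _ _ _ _).2 h; apply: hk.2.
  exact: bwd_none hpc.
split; first exact: part1.
split.
  move=> i j z il jl ij hi hj; apply: ij.
  apply: (distinct pr p2 hord seps heps il jl).
  have h1 := piece_lvl1 pr hd lamc eps hK0 hi.
  have h2 := piece_lvl1 pr hd lamc eps hK0 hj.
  have -> : ((lam 1%N : zsq (d 1%N)) ^+ i - (lam 1%N : zsq (d 1%N)) ^+ j) =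
    ((z 1%N : zsq (d 1%N)) - (lam 1%N : zsq (d 1%N)) ^+ j) -
    ((z 1%N : zsq (d 1%N)) - (lam 1%N : zsq (d 1%N)) ^+ i) by ring.
  exact: dvB h2 h1.
move=> hl2 hk1 z zc; rewrite part1 //; split.
  by case=> i _ [].
move=> hU; have [i il hi] := count_main pr p2 hd hord seps heps hd1 hl2 hU.
exists i => //; split => //; subst k; apply/inpk_zpow; exact: hi.
Qed.
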